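(* Let $R>0$, let $\{\beta_k\}_{k\ge0}\subseteq(0,1)$ and $\alpha_0\in(0,\frac1R)$. Define sequences $\{A_k\},\{B_k\},\{\alpha_k\}$ by $B_0=1$ and, for $k\ge0$, $$A_k=\frac{\alpha_k}{2\beta_k}B_k,\qquad B_{k+1}=\frac{B_k}{1-\beta_k},\qquad \alpha_{k+1}=\frac{\alpha_k\beta_{k+1}(1-\alpha_k^2R^2-\beta_k^2)}{\beta_k(1-\beta_k)(1-\alpha_k^2R^2)}.$$ Suppose $\alpha_k\in(0,\frac1R)$ for all $k\ge0$. Let $\mathbf L\colon\mathbb R^n\times\mathbb R^m\to\mathbb R$ be $R$-smooth and convex-concave, let $\mathbf z^0\in\mathbb R^n\times\mathbb R^m$, and define the EAG iterates $$\mathbf z^{k+1/2}=\mathbf z^k+\beta_k(\mathbf z^0-\mathbf z^k)-\alpha_k\mathbf G(\mathbf z^k),\qquad \mathbf z^{k+1}=\mathbf z^k+\beta_k(\mathbf z^0-\mathbf z^k)-\alpha_k\mathbf G(\mathbf z^{k+1/2}),\quad k\ge0.$$ Then the sequence $$V_k:=A_k\|\mathbf G(\mathbf z^k)\|^2+B_k\langle\mathbf G(\mathbf z^k),\mathbf z^k-\mathbf z^0\rangle$$ is nonincreasing in $k$.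
   Context: Write $\mathbf z=(\mathbf x,\mathbf y)$. $\mathbf L$ convex-concave: convex in $\mathbf x$ for fixed $\mathbf y$, concave in $\mathbf y$ for fixed $\mathbf x$. $\mathbf G(\mathbf z)=(\nabla_{\mathbf x}\mathbf L(\mathbf x,\mathbf y),-\nabla_{\mathbf y}\mathbf L(\mathbf x,\mathbf y))$; $\mathbf L$ is $R$-smooth if it is differentiable and $\mathbf G$ is $R$-Lipschitz. *)

(* Defs.v *)
From mathcomp Require Import all_boot all_algebra all_classical all_reals all_analysis.
Import GRing.Theory Num.Theory.
Local Open Scope ring_scope.

Set Implicit Arguments. Unset Strict Implicit. Unset Printing Implicit Defensive.

Section Defs.
Variables (R : realType) (n m : nat).
Notation Z := ('rV[R]_n * 'rV[R]_m)%type.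

Definition dotv (k : nat) (u v : 'rV[R]_k) : R := \sum_(i < k) u 0 i * v 0 i.
Definition dotz (z w : Z) : R := dotv z.1 w.1 + dotv z.2 w.2.
Definition normz (z : Z) : R := Num.sqrt (dotz z z).

Definition convex_concave (L : Z -> R) : Prop :=
  (forall (y : 'rV[R]_m) (x1 x2 : 'rV[R]_n) (t : R), 0 <= t <= 1 ->
     L ((1 - t) *: x1 + t *: x2, y) <= (1 - t) * L (x1, y) + t * L (x2, y)) /\
  (forall (x : 'rV[R]_n) (y1 y2 : 'rV[R]_m) (t : R), 0 <= t <= 1 ->
     (1 - t) * L (x, y1) + t * L (x, y2) <= L (x, (1 - t) *: y1 + t *: y2)).

(* Gradient field G(z) = (grad_x L(z), - grad_y L(z)), via partial derivatives
   read off from the (Frechet) differential 'd L z. *)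
Definition dL (L : 'rV[R]_n * 'rV[R]_m -> R) := fun z h => ('d L z h : R).

Definition Gop (L : Z -> R) (z : Z) : Z :=
  (\row_(i < n) dL L z (delta_mx 0 i, 0),
   - \row_(j < m) dL L z (0, delta_mx 0 j)).

Definition smooth_cc (Rs : R) (L : Z -> R) : Prop :=
  (forall z, differentiable L z) /\
  (forall z w : Z, normz (Gop L z - Gop L w) <= Rs * normz (z - w)).

Fixpoint alpha_seq (Rs : R) (beta : nat -> R) (a0 : R) (k : nat) : R :=
  match k with
  | 0 => a0
  | k'.+1 => let a := alpha_seq Rs beta a0 k' in
      a * beta k'.+1 * (1 - a ^+ 2 * Rs ^+ 2 - beta k' ^+ 2)
        / (beta k' * (1 - beta k') * (1 - a ^+ 2 * Rs ^+ 2))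
  end.

Fixpoint B_seq (beta : nat -> R) (k : nat) : R :=
  match k with
  | 0 => 1
  | k'.+1 => B_seq beta k' / (1 - beta k')
  end.

Definition A_seq (Rs : R) (beta : nat -> R) (a0 : R) (k : nat) : R :=
  alpha_seq Rs beta a0 k / (2 * beta k) * B_seq beta k.

Fixpoint eag (G : Z -> Z) (alpha beta : nat -> R) (z0 : Z) (k : nat) : Z :=
  match k with
  | 0 => z0
  | k'.+1 => let z := eag G alpha beta z0 k' in
      let zh := z + beta k' *: (z0 - z) - alpha k' *: G z in
      z + beta k' *: (z0 - z) - alpha k' *: G zh
  end.

Definition Vk (Rs : R) (beta : nat -> R) (a0 : R) (L : Z -> R) (z0 : Z) (k : nat) : R :=
  let G := Gop L in
  let z := eag G (alpha_seq Rs beta a0) beta z0 k in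
  A_seq Rs beta a0 k * normz (G z) ^+ 2 + B_seq beta k * dotz (G z) (z - z0).

End Defs.

(* Main.v *)
Require Import Defs.
From mathcomp Require Import all_boot all_algebra all_classical all_reals all_analysis.
Import GRing.Theory Num.Theory numFieldNormedType.Exports.
From mathcomp Require Import all_order ring lra.
Import Order.TTheory.
Local Open Scope ring_scope.
Local Open Scope classical_set_scope.

Lemma conv1 (R : realType) (f : R -> R) (d f0 f1 : R) :
  t^-1 * (f t - f0) @[t --> (0:R)^'] --> d ->
  (forall t, 0 < t <= 1 -> f t <= (1-t)*f0 + t*f1) -> d <= f1 - f0.
Proof.
move=> /cvg_dnbhs_at_right hc hf.
apply: (cvgr_to_le hc).
near=> t.
have ht : 0 < t <= 1.
  apply/andP; split; [near: t; exact: nbhs_right_gt|near: t; exact: nbhs_right_le].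
have t0 : 0 < t by case/andP: ht.
rewrite ler_pdivrMl //.
have := hf t ht; lra.
Unshelve. all: by end_near.
Qed.
Lemma conv2 (R : realType) (f : R -> R) (d f0 f1 : R) :
  t^-1 * (f t - f0) @[t --> (0:R)^'] --> d ->
  (forall t, 0 < t <= 1 -> (1-t)*f0 + t*f1 <= f t) -> f1 - f0 <= d.
Proof.
move=> /cvg_dnbhs_at_right hc hf.
apply: (cvgr_to_ge hc).
near=> t.
have ht : 0 < t <= 1.
  apply/andP; split; [near: t; exact: nbhs_right_gt|near: t; exact: nbhs_right_le].
have t0 : 0 < t by case/andP: ht.
rewrite ler_pdivlMl //.
have := hf t ht; lra.
Unshelve. all: by end_near.
Qed.
Section S.
Variables (R : realType) (n m : nat).
Local Notation Z := ('rV[R]_n * 'rV[R]_m)%type.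

Lemma dquot (L : Z -> R) (z v : Z) : differentiable L z ->
  t^-1 * (L (t *: v + z) - L z) @[t --> (0:R)^'] --> 'd L z v.
Proof.
move=> hd; have h := @diff_derivable _ _ _ _ _ v hd.
rewrite -deriveE //; exact: h.
Qed.

Lemma dot1 (L : Z -> R) (z : Z) (v : 'rV[R]_n) :
  dotv (Gop L z).1 v = 'd L z (v, 0).
Proof.
rewrite /dotv /Gop /=.
have -> : (v, 0) = \sum_(i < n) v 0 i *: ((delta_mx 0 i : 'rV[R]_n), (0 : 'rV[R]_m)) :> Z.
  rewrite [RHS]surjective_pairing; congr pair; apply/esym.
    rewrite (big_morph (fun p : Z => p.1) (id1 := 0) (op1 := +%R)) //=.
    by rewrite -row_sum_delta.
  rewrite (big_morph (fun p : Z => p.2) (id1 := 0) (op1 := +%R)) //=.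
  by rewrite big1 // => i _; rewrite scaler0.
rewrite linear_sum /=; apply: eq_bigr => i _.
by rewrite linearZ /= mxE mulrC /dL.
Qed.

Lemma dot2 (L : Z -> R) (z : Z) (w : 'rV[R]_m) :
  dotv (Gop L z).2 w = - 'd L z (0, w).
Proof.
rewrite /dotv /Gop /=.
have -> : (0, w) = \sum_(i < m) w 0 i *: ((0 : 'rV[R]_n), (delta_mx 0 i : 'rV[R]_m)) :> Z.
  rewrite [RHS]surjective_pairing; congr pair; apply/esym.
    rewrite (big_morph (fun p : Z => p.1) (id1 := 0) (op1 := +%R)) //=.
    by rewrite big1 // => i _; rewrite scaler0.
  rewrite (big_morph (fun p : Z => p.2) (id1 := 0) (op1 := +%R)) //=.
  by rewrite -row_sum_delta.
rewrite linear_sum /= -sumrN; apply: eq_bigr => i _.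
by rewrite linearZ /= !mxE mulrC /dL mulrN.
Qed.
Lemma sc1 (a : R) (p : Z) : (a *: p).1 = a *: p.1. Proof. by []. Qed.
Lemma sc2 (a : R) (p : Z) : (a *: p).2 = a *: p.2. Proof. by []. Qed.

Lemma gx_ineq (L : Z -> R) (x x' : 'rV[R]_n) (y : 'rV[R]_m) :
  differentiable L (x, y) -> convex_concave L ->
  dotv (Gop L (x, y)).1 (x' - x) <= L (x', y) - L (x, y).
Proof.
move=> hd [cx _]; rewrite dot1.
apply: (@conv1 _ (fun t => L (t *: ((x' - x, 0) : Z) + (x, y)))).
  exact: dquot.
move=> t /andP[t0 t1].
have -> : t *: ((x' - x, 0) : Z) + (x, y) = ((1 - t) *: x + t *: x', y).
  congr pair; rewrite ?sc1 ?sc2 /=; last by rewrite scaler0 add0r.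
  by apply/rowP => i; rewrite !mxE; ring.
by apply: cx; apply/andP; split; lra.
Qed.

Lemma gy_ineq (L : Z -> R) (x : 'rV[R]_n) (y y' : 'rV[R]_m) :
  differentiable L (x, y) -> convex_concave L ->
  L (x, y') - L (x, y) <= - dotv (Gop L (x, y)).2 (y' - y).
Proof.
move=> hd [_ cv]; rewrite dot2 opprK.
apply: (@conv2 _ (fun t => L (t *: ((0, y' - y) : Z) + (x, y)))).
  exact: dquot.
move=> t /andP[t0 t1].
have -> : t *: ((0, y' - y) : Z) + (x, y) = (x, (1 - t) *: y + t *: y').
  congr pair; rewrite ?sc1 ?sc2 /=; first by rewrite scaler0 add0r.
  by apply/rowP => i; rewrite !mxE; ring.
by apply: cv; apply/andP; split; lra.
Qed.

Lemma dotvDl k (u v w : 'rV[R]_k) : dotv (u + v) w = dotv u w + dotv v w.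
Proof. by rewrite /dotv -big_split; apply: eq_bigr => i _; rewrite mxE mulrDl. Qed.
Lemma dotvNl k (u w : 'rV[R]_k) : dotv (- u) w = - dotv u w.
Proof. by rewrite /dotv -sumrN; apply: eq_bigr => i _; rewrite mxE mulNr. Qed.
Lemma dotvZl k c (u w : 'rV[R]_k) : dotv (c *: u) w = c * dotv u w.
Proof. by rewrite /dotv mulr_sumr; apply: eq_bigr => i _; rewrite mxE mulrA. Qed.
Lemma dotvC k (u w : 'rV[R]_k) : dotv u w = dotv w u.
Proof. by rewrite /dotv; apply: eq_bigr => i _; rewrite mulrC. Qed.
Lemma dotvDr k (u v w : 'rV[R]_k) : dotv w (u + v) = dotv w u + dotv w v.
Proof. by rewrite !(dotvC _ w) dotvDl. Qed.
Lemma dotvNr k (u w : 'rV[R]_k) : dotv w (- u) = - dotv w u.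
Proof. by rewrite !(dotvC _ w) dotvNl. Qed.
Lemma dotvZr k c (u w : 'rV[R]_k) : dotv w (c *: u) = c * dotv w u.
Proof. by rewrite !(dotvC _ w) dotvZl. Qed.
Lemma dotv_ge0 k (u : 'rV[R]_k) : 0 <= dotv u u.
Proof. by rewrite /dotv; apply: sumr_ge0 => i _; rewrite -expr2 sqr_ge0. Qed.

Lemma dotzDl (p q r : Z) : dotz (p + q) r = dotz p r + dotz q r.
Proof. rewrite /dotz -[(p+q).1]/(p.1+q.1) -[(p+q).2]/(p.2+q.2) !dotvDl; ring. Qed.
Lemma dotzNl (p r : Z) : dotz (- p) r = - dotz p r.
Proof. rewrite /dotz -[(-p).1]/(-p.1) -[(-p).2]/(-p.2) !dotvNl; ring. Qed.
Lemma dotzZl c (p r : Z) : dotz (c *: p) r = c * dotz p r.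
Proof. rewrite /dotz -[(c *: p).1]/(c *: p.1) -[(c *: p).2]/(c *: p.2) !dotvZl; ring. Qed.
Lemma dotzC (p r : Z) : dotz p r = dotz r p.
Proof. by rewrite /dotz dotvC (dotvC _ p.2). Qed.
Lemma dotzDr (p q r : Z) : dotz r (p + q) = dotz r p + dotz r q.
Proof. by rewrite !(dotzC r) dotzDl. Qed.
Lemma dotzNr (p r : Z) : dotz r (- p) = - dotz r p.
Proof. by rewrite !(dotzC r) dotzNl. Qed.
Lemma dotzZr c (p r : Z) : dotz r (c *: p) = c * dotz r p.
Proof. by rewrite !(dotzC r) dotzZl. Qed.
Lemma dotz_ge0 (p : Z) : 0 <= dotz p p.
Proof. by rewrite /dotz addr_ge0 // dotv_ge0. Qed.
Lemma normz2 (p : Z) : normz p ^+ 2 = dotz p p.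
Proof. by rewrite /normz sqr_sqrtr // dotz_ge0. Qed.
Lemma normz_ge0 (p : Z) : 0 <= normz p.
Proof. exact: sqrtr_ge0. Qed.

Lemma pairP (p q : Z) : p.1 = q.1 -> p.2 = q.2 -> p = q.
Proof. by case: p => ? ?; case: q => ? ? /= -> ->. Qed.
Lemma ad1 (p q : Z) : (p + q).1 = p.1 + q.1. Proof. by []. Qed.
Lemma ad2 (p q : Z) : (p + q).2 = p.2 + q.2. Proof. by []. Qed.
Lemma ng1 (p : Z) : (- p).1 = - p.1. Proof. by []. Qed.
Lemma ng2 (p : Z) : (- p).2 = - p.2. Proof. by []. Qed.

Lemma mono (L : Z -> R) (p q : Z) : (forall z, differentiable L z) -> convex_concave L ->
  0 <= dotz (Gop L p - Gop L q) (p - q).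
Proof.
move=> hd hcc; case: p => x' y'; case: q => x y.
have h1 := gx_ineq L x x' y (hd (x, y)) hcc.
have h2 := gx_ineq L x' x y' (hd (x', y')) hcc.
have h3 := gy_ineq L x y y' (hd (x, y)) hcc.
have h4 := gy_ineq L x' y' y (hd (x', y')) hcc.
move: h1 h2 h3 h4; rewrite /dotz !(ad1, ad2, ng1, ng2).
rewrite -[(x', y').1]/x' -[(x', y').2]/y' -[(x, y).1]/x -[(x, y).2]/y.
move: (Gop L (x, y)) (Gop L (x', y')) => [g1 g2] [g1' g2'] /=.
move: (L (x, y)) (L (x', y')) (L (x, y')) (L (x', y)) => l1 l2 l3 l4.
rewrite !(dotvDl, dotvDr, dotvNl, dotvNr).
lra.
Qed.
End S.

Lemma Bpos (R : realType) (beta : nat -> R) k : (forall k, 0 < beta k < 1) -> 0 < B_seq beta k.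
Proof.
move=> hb; elim: k => [|k IH] //=.
by rewrite divr_gt0 // subr_gt0; case/andP: (hb k).
Qed.
Lemma final (R : realType) (a b b' Rs B gg gw uu uw uh gh hh : R) :
 0 < Rs -> 0 < b < 1 -> 0 < b' -> 0 < a < 1/Rs -> 0 < B ->
 0 <= -b*uw - a*uh + b*gw + a*gh ->
 uu - 2*uh + hh <= Rs^+2 * a^+2 * (gg - 2*gh + hh) ->
 (forall lam, 0 <= hh + 2*lam*uh + lam^+2*uu) ->
 (a*b'*(1 - a^+2*Rs^+2 - b^+2)/(b*(1-b)*(1-a^+2*Rs^+2))) / (2*b') * (B/(1-b)) * uu
   + B/(1-b) * ((1-b)*uw - a*uh) <= a/(2*b)*B*gg + B*gw.
Proof.
move=> R0 /andP[b0 b1] b'0 /andP[a0 a1] B0 mono lip sq.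
have aR : a * Rs < 1 by rewrite -ltr_pdivlMr // mul1r -[Rs^-1]mul1r.
have r0 : 0 < a^+2 * Rs^+2 by rewrite mulr_gt0 // exprn_gt0.
have r1 : a^+2 * Rs^+2 < 1.
  rewrite -exprMn expr2; apply: (@lt_trans _ _ (a * Rs)); last by [].
  by rewrite gtr_pMr // mulr_gt0.
set r := a^+2 * Rs^+2 in r0 r1 *.
set lam := ((1-b)^-1 * r - 1) / (1 - r).
have key : a/(2*b)*B*gg + B*gw -
  ((a*b'*(1 - r - b^+2)/(b*(1-b)*(1-r))) / (2*b') * (B/(1-b)) * uu
   + B/(1-b) * ((1-b)*uw - a*uh)) =
  B/b * (-b*uw - a*uh + b*gw + a*gh)
  + a*B/(2*b*r) * (r*(gg - 2*gh + hh) - (uu - 2*uh + hh))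
  + a*B*(1-r)/(2*b*r) * (hh + 2*lam*uh + lam^+2*uu).
  rewrite /lam /r; field.
  have hr : 1 - (a*Rs)^+2 != 0 by rewrite exprMn subr_eq0 eq_sym lt_eqF.
  rewrite hr /=.
  repeat (apply/andP; split); rewrite ?subr_eq0; first [by rewrite gt_eqF | by rewrite lt_eqF].

rewrite -subr_ge0 key.
have lip' : 0 <= r*(gg - 2*gh + hh) - (uu - 2*uh + hh).
  have e : Rs^+2 * a^+2 = r by rewrite /r mulrC.
  rewrite e in lip; lra.
apply: addr_ge0; [apply: addr_ge0|]; apply: mulr_ge0 => //.
- by rewrite ltW // divr_gt0.
- by rewrite ltW // divr_gt0 ?mulr_gt0.
- by rewrite ltW // divr_gt0 ?mulr_gt0 ?subr_gt0.
Qed.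

Section V.
Variables (R : realType) (n m : nat).
Local Notation Z := ('rV[R]_n * 'rV[R]_m)%type.
Lemma vecE1 (z z0 h : Z) (a b : R) :
  (z + b *: (z0 - z) - a *: h) - z0 = (1 - b) *: (z - z0) - a *: h.
Proof.
apply: pairP; rewrite !(ad1, ad2, ng1, ng2, sc1, sc2);
by apply/rowP => i; rewrite !mxE; ring.
Qed.
Lemma vecE2 (z z0 h : Z) (a b : R) :
  (z + b *: (z0 - z) - a *: h) - z = - (b *: (z - z0)) - a *: h.
Proof.
apply: pairP; rewrite !(ad1, ad2, ng1, ng2, sc1, sc2);
by apply/rowP => i; rewrite !mxE; ring.
Qed.
Lemma vecE3 (z z0 g h : Z) (a b : R) :
  (z + b *: (z0 - z) - a *: h) - (z + b *: (z0 - z) - a *: g) = a *: (g - h).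
Proof.
apply: pairP; rewrite !(ad1, ad2, ng1, ng2, sc1, sc2);
by apply/rowP => i; rewrite !mxE; ring.
Qed.
End V.

Theorem lemma2 (R : realType) (n m : nat) (Rs : R) (beta : nat -> R) (a0 : R)
  (L : 'rV[R]_n * 'rV[R]_m -> R) (z0 : 'rV[R]_n * 'rV[R]_m) :
  0 < Rs ->
  (forall k, 0 < beta k < 1) ->
  0 < a0 < 1 / Rs ->
  (forall k, 0 < alpha_seq Rs beta a0 k < 1 / Rs) ->
  smooth_cc Rs L ->
  convex_concave L ->
  forall k : nat, Vk Rs beta a0 L z0 k.+1 <= Vk Rs beta a0 L z0 k.
Proof.
move=> R0 hb ha0 ha [hd hl] hcc k.
set G := Gop L; set al := alpha_seq Rs beta a0.
pose z := eag G al beta z0 k.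
pose zh := z + beta k *: (z0 - z) - al k *: G z.
pose z1 := z + beta k *: (z0 - z) - al k *: G zh.
have ez1 : eag G al beta z0 k.+1 = z1 by [].
have eA1 : al k.+1 = al k * beta k.+1 * (1 - al k ^+ 2 * Rs ^+ 2 - beta k ^+ 2) / (beta k * (1 - beta k) * (1 - al k ^+ 2 * Rs ^+ 2)) by [].
have eB1 : B_seq beta k.+1 = B_seq beta k / (1 - beta k) by [].
rewrite /Vk /A_seq; cbv zeta; rewrite -/G -/al ez1 eA1 eB1 -/z.
have E1 : z1 - z0 = (1 - beta k) *: (z - z0) - al k *: G zh := vecE1 _ _ _ _ _ _ _ _.
have E2 : z1 - z = - (beta k *: (z - z0)) - al k *: G zh := vecE2 _ _ _ _ _ _ _ _.
have E3 : z1 - zh = al k *: (G z - G zh) := vecE3 _ _ _ _ _ _ _ _ _.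
have hmono : 0 <= dotz (G z1 - G z) (z1 - z) := mono _ _ _ L z1 z hd hcc.
have H : normz (G z1 - G zh) <= Rs * normz (z1 - zh) := hl z1 zh.
clearbody z1 zh z; clearbody G.
rewrite E2 in hmono; rewrite E3 in H.
have hlip : dotz (G z1 - G zh) (G z1 - G zh) <= Rs ^+ 2 * al k ^+ 2 * dotz (G z - G zh) (G z - G zh).
  have := ler_pM (normz_ge0 _ _ _ _) (normz_ge0 _ _ _ _) H H.
  rewrite -!expr2 exprMn !normz2 dotzZl dotzZr mulrA -expr2.
  by rewrite mulrA.
rewrite !normz2 E1.
move: hmono hlip; move: (z - z0) => w.
move: (G z) (G zh) (G z1) => g h u hmono hlip.
rewrite dotzDr dotzNr !dotzZr.
have ab : 0 < al k < 1 / Rs := ha k.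
have Bp := Bpos _ _ k hb. have bb := hb k. move: (hb k.+1) => /andP[b'0 _].
clearbody al.
move: (al k) (beta k) (beta k.+1) (B_seq beta k) ab bb b'0 Bp hmono hlip => a b b' B ab bb b'0 Bp hmono hlip.
apply: (@final R _ _ _ _ _ _ _ _ _ _ (dotz g h) (dotz h h) R0 bb b'0 ab Bp).
- move: hmono; rewrite !(dotzDl, dotzDr, dotzNl, dotzNr, dotzZl, dotzZr).
  lra.
- move: hlip; rewrite !(dotzDl, dotzDr, dotzNl, dotzNr, dotzZl, dotzZr) (dotzC _ _ _ h g) (dotzC _ _ _ h u).
  lra.
- move=> lam; have := dotz_ge0 _ _ _ (h + lam *: u).
  rewrite !(dotzDl, dotzDr, dotzNl, dotzNr, dotzZl, dotzZr) (dotzC _ _ _ h u).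
  lra.
Qed.
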